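(* Let $\mathcal V$ be an operator space and $\mathcal D'\subseteq\mathcal D$ an inclusion of noncommutative domains in $\mathcal V_{\rm nc}$ such that $M:=\sup_{n}\sup_{x\in\mathcal D'_n}\|x\|<+\infty$ and $m:=\inf_{n}\inf\{\|x-w\|\colon x\in\mathcal D'_n,\ w\in\mathcal V^{n\times n}\setminus\mathcal D_n\}>0$, and let $k\in[0,1)$ be a constant with $k\,\tilde\delta_{\mathcal D'}\ge\tilde\delta_{\mathcal D}$ on each level of $\mathcal D'$ (such $k$ exists, e.g. $k=M/(m+M)$). Then $k\,\tilde d_{\mathcal D'}(a,c)\ge\tilde d_{\mathcal D}(a,c)$ for all $n$ and $a,c\in\mathcal D'_n$.
   Context: A noncommutative domain is a family of open sets $\mathcal D_n\subseteq\mathcal V^{n\times n}$ closed under direct sums. $\delta_{\mathcal D}(a,c)(b)=\big[\sup\{t\in[0,+\infty]\colon\begin{bmatrix}a&sb\\0&c\end{bmatrix}\in\mathcal D_{n+m}\ \forall s\in[0,t]\}\big]^{-1}$ ($1/0=+\infty,1/\infty=0$), $\tilde\delta_{\mathcal D}(a,c)=\delta_{\mathcal D}(a,c)(a-c)$, and $\tilde d_{\mathcal D}(a,c)=\inf\{\sum_{j=1}^N\tilde\delta_{\mathcal D}(a_{j-1},a_j)\colon N\in\mathbb N,\ a_0=a,a_N=c,\ a_j\in\mathcal D_n\}$; likewise for $\mathcal D'$ (with divisions in $\mathcal D'_n$). *)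

(* Defs.v *)
From HB Require Import structures.
From mathcomp Require Import all_boot all_order all_algebra.
From mathcomp Require Import complex.
From mathcomp Require Import boolp classical_sets reals constructive_ereal ereal.
Set Implicit Arguments. Unset Strict Implicit. Unset Printing Implicit Defensive.
Import Order.TTheory GRing.Theory Num.Theory.
Local Open Scope ring_scope.
Local Open Scope classical_set_scope.

Section OpSpace.
Variable R : realType.
Local Notation C := (complex R).

Definition vnorm n (v : 'cV[C]_n) : R :=
  Num.sqrt (\sum_(i < n) (ComplexField.Normc.normc (v i 0)) ^+ 2).

Definition opnorm n m (alpha : 'M[C]_(n, m)) : R :=
  sup [set vnorm (alpha *m v) | v in [set v : 'cV[C]_m | vnorm v <= 1]].

Variable V : lmodType C.

Definition smulmx m n p (alpha : 'M[C]_(m, n)) (x : 'M[V]_(n, p)) : 'M[V]_(m, p) :=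
  \matrix_(i, j) \sum_(k < n) alpha i k *: x k j.
Definition mulsmx m n p (x : 'M[V]_(m, n)) (beta : 'M[C]_(n, p)) : 'M[V]_(m, p) :=
  \matrix_(i, j) \sum_(k < n) beta k j *: x i k.

Definition dsum n m (x : 'M[V]_n) (y : 'M[V]_m) : 'M[V]_(n + m) :=
  block_mx x 0 0 y.

Record opSpace := OpSpace {
  nrm : forall n, 'M[V]_n -> R;
  nrm_ge0 : forall n (x : 'M[V]_n), 0 <= nrm x;
  nrm_eq0 : forall n (x : 'M[V]_n), nrm x = 0 -> x = 0;
  nrm_triangle : forall n (x y : 'M[V]_n), nrm (x + y) <= nrm x + nrm y;
  nrm_scale : forall n (c : C) (x : 'M[V]_n),
      nrm (map_mx (fun v => c *: v) x) = ComplexField.Normc.normc c * nrm x;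
  ruan1 : forall n m (x : 'M[V]_n) (y : 'M[V]_m),
      nrm (dsum x y) = Num.max (nrm x) (nrm y);
  ruan2 : forall n m (alpha : 'M[C]_(m, n)) (x : 'M[V]_n) (beta : 'M[C]_(n, m)),
      nrm (mulsmx (smulmx alpha x) beta) <= opnorm alpha * nrm x * opnorm beta
}.

Variable os : opSpace.

Definition nc_domain (D : forall n, set 'M[V]_n) : Prop :=
  (forall n, (0 < n)%N -> forall x, D n x ->
     exists2 e : R, 0 < e & forall y, nrm os (y - x) < e -> D n y)
  /\ (forall n m (x : 'M[V]_n) (y : 'M[V]_m), (0 < n)%N -> (0 < m)%N ->
        D n x -> D m y -> D (n + m)%N (dsum x y)).

Definition einv (x : \bar R) : \bar R :=
  if x == 0%E then +oo%E else if x == +oo%E then 0%E else ((fine x)^-1)%:E.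

Definition delta (D : forall n, set 'M[V]_n) n m
    (a : 'M[V]_n) (c : 'M[V]_m) (b : 'M[V]_(n, m)) : \bar R :=
  einv (ereal_sup [set t : \bar R | (0 <= t)%E /\
     forall s : R, 0 <= s -> (s%:E <= t)%E ->
       D (n + m)%N (block_mx a (map_mx (fun v => (s%:C)%C *: v) b) 0 c)]).

Definition delta_t (D : forall n, set 'M[V]_n) n (a c : 'M[V]_n) : \bar R :=
  delta D a c (a - c).

Definition d_t (D : forall n, set 'M[V]_n) n (a c : 'M[V]_n) : \bar R :=
  ereal_inf [set S : \bar R | exists (N : nat) (f : nat -> 'M[V]_n),
     [/\ f 0%N = a, f N = c, (forall j, (j <= N)%N -> D n (f j)) &
         S = (\sum_(1 <= j < N.+1) delta_t D (f j.-1) (f j))%E]].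

End OpSpace.

(* Main.v *)
Require Import Defs.
From HB Require Import structures.
From mathcomp Require Import all_boot all_order all_algebra.
From mathcomp Require Import complex.
From mathcomp Require Import boolp classical_sets reals constructive_ereal ereal.
Import Order.TTheory GRing.Theory Num.Theory.
Local Open Scope ring_scope.
Local Open Scope classical_set_scope.

Lemma einv_sup_ge0 (R : realType) (S : set (\bar R)) :
  (forall t, S t -> 0 <= t)%E -> (0 <= einv (ereal_sup S))%E.
Proof.
move=> S0; rewrite /einv; case: eqP => // _; case: eqP => // _.
rewrite lee_fin invr_ge0.
case Hx: (ereal_sup S) => [r| |] //=.
rewrite leNgt; apply/negP => r0.
have : (-oo < ereal_sup S)%E by rewrite Hx ltNyr.
move=> /ereal_sup_gt [y Sy _].
have := ereal_sup_ubound Sy; rewrite Hx => yr.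
have := le_trans (S0 _ Sy) yr; rewrite lee_fin => r0'.
by move: r0; rewrite ltNge r0'.
Qed.

Lemma delta_t_ge0 (R : realType) (V : lmodType (complex R))
  (D : forall n, set 'M[V]_n) n (a c : 'M[V]_n) : (0 <= delta_t D a c)%E.
Proof. by apply: einv_sup_ge0 => t []. Qed.

Theorem corollary5p4 (R : realType) (V : lmodType (complex R)) (os : opSpace V)
  (D D' : forall n, set 'M[V]_n)
  (hD : nc_domain os D) (hD' : nc_domain os D')
  (hsub : forall n, (0 < n)%N -> D' n `<=` D n)
  (hM : (ereal_sup [set r : \bar R | exists n (x : 'M[V]_n),
           [/\ (0 < n)%N, D' n x & r = (nrm os x)%:E]] < +oo)%E)
  (hm : (0 < ereal_inf [set r : \bar R | exists n (x w : 'M[V]_n),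
           [/\ (0 < n)%N, D' n x, ~ D n w & r = (nrm os (x - w))%:E]])%E)
  (k : R) (hk0 : 0 <= k) (hk1 : k < 1)
  (hk : forall n, (0 < n)%N -> forall a c : 'M[V]_n, D' n a -> D' n c ->
          (k%:E * delta_t D' a c >= delta_t D a c)%E) :
  forall n, (0 < n)%N -> forall a c : 'M[V]_n, D' n a -> D' n c ->
    (k%:E * d_t D' a c >= d_t D a c)%E.
Proof.
move=> n n0 a c Da Dc.
have key : forall S, [set S : \bar R | exists (N : nat) (f : nat -> 'M[V]_n),
     [/\ f 0%N = a, f N = c, (forall j, (j <= N)%N -> D' n (f j)) &
         S = (\sum_(1 <= j < N.+1) delta_t D' (f j.-1) (f j))%E]] S ->
    (d_t D a c <= k%:E * S)%E.
  move=> S [N [f [f0 fN fD ->]]].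
  apply: (@le_trans _ _ (\sum_(1 <= j < N.+1) delta_t D (f j.-1) (f j))%E).
    apply: ge_ereal_inf; exists (\sum_(1 <= j < N.+1) delta_t D (f j.-1) (f j))%E => //.
    exists N, f; split => // j jN; exact: hsub (fD j jN).
  rewrite ge0_sume_distrr; last by move=> j _; exact: delta_t_ge0.
  rewrite big_seq [X in (_ <= X)%E]big_seq; apply: lee_sum => j.
  rewrite mem_index_iota => /andP [j1 jN].
  apply: hk => //; apply: fD.
    by apply: leq_trans (leq_pred j) _; rewrite -ltnS.
  by rewrite -ltnS.
have [k0|kpos] := eqVneq k 0.
  set f := fun j : nat => if j == 0%N then a else c.
  have fD : forall j, (j <= 1)%N -> D' n (f j).
    by move=> j _; rewrite /f; case: eqP.
  have := key (\sum_(1 <= j < 2) delta_t D' (f j.-1) (f j))%E.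
  move=> H; rewrite k0 mul0e; rewrite k0 mul0e in H; apply: H; exists 1%N, f; split => //.
have kp : 0 < k by rewrite lt_def kpos hk0.
rewrite -lee_pdivrMl //; apply: le_ereal_inf_tmp => S HS.
by rewrite lee_pdivrMl //; exact: key.
Qed.
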